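(* Let $A\in\mathbb F^{n\times n}$ be Lyapunov regular and $B\in\{A\}''_{\mathbb F}$. Then the matricization $L_{A,B}\in\mathbb F^{n^2\times n^2}$ of $\mathcal L_{A,B}$ belongs to $\overline{\{A^*\}''_{\mathbb F}}\otimes\{A^*\}''_{\mathbb F}$ (the span of Kronecker products $\bar X\otimes Y$ with $X,Y\in\{A^*\}''_{\mathbb F}$).
   Context: $\mathbb F=\mathbb R$ or $\mathbb C$; $Y^*$ is conjugate transpose; $\bar X$ is entrywise complex conjugate. $A$ is Lyapunov regular if its eigenvalues satisfy $\lambda_i+\bar\lambda_j\ne0$ for all $i,j$. $\mathcal L_Y(X)=XY+Y^*X$, and $\mathcal L_{A,B}=\mathcal L_B\circ\mathcal L_A^{-1}$. $\{A\}''_{\mathbb F}$ is the bicommutant of $A$ in $\mathbb F^{n\times n}$. The matricization of a linear map $\mathcal L:\mathbb F^{q\times q}\to\mathbb F^{n\times n}$ is the matrix $L\in\mathbb F^{n^2\times q^2}$ with $L\,\mathrm{vec}(V)=\mathrm{vec}(\mathcal L(V))$, where $\mathrm{vec}$ stacks columns. *)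

(* Defs.v *)
From HB Require Import structures.
From mathcomp Require Import all_boot all_order all_algebra.
Set Implicit Arguments. Unset Strict Implicit. Unset Printing Implicit Defensive.
Import Order.TTheory GRing.Theory Num.Theory.
Local Open Scope ring_scope.

(* The paper's F is either C itself (realcase = false) or the
   real subfield R = Num.real of C (realcase = true). *)
Section Defs.
Variable C : numClosedFieldType.

Definition inF (realcase : bool) (x : C) : bool := realcase ==> (x \is Num.real).

Definition mxF (realcase : bool) m n (X : 'M[C]_(m, n)) : Prop :=
  forall i j, inF realcase (X i j).

Definition conjmx m n (X : 'M[C]_(m, n)) : 'M[C]_(m, n) := map_mx Num.conj X.

Definition adjmx n (Y : 'M[C]_n) : 'M[C]_n := (conjmx Y)^T.

Definition bicomm (realcase : bool) n (A : 'M[C]_n) (X : 'M[C]_n) : Prop :=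
  mxF realcase X /\
  forall Y : 'M[C]_n, mxF realcase Y -> A *m Y = Y *m A -> X *m Y = Y *m X.

Definition lyap_regular n (A : 'M[C]_n) : Prop :=
  forall a b : C, eigenvalue A a -> eigenvalue A b -> a + b^* != 0.

Definition lyap n (Y : 'M[C]_n) (X : 'M[C]_n) : 'M[C]_n := X *m Y + adjmx Y *m X.

Definition lyap_inv n (A : 'M[C]_n) (V : 'M[C]_n) : 'M[C]_n :=
  vec_mx (mxvec V *m invmx (lin_mx (lyap A))).

Definition lyapAB n (A B : 'M[C]_n) (V : 'M[C]_n) : 'M[C]_n :=
  lyap B (lyap_inv A V).

Lemma div_sq_lt n (r : 'I_(n * n)) : (r %/ n < n)%N.
Proof.
case: n r => [|n] [r /= Hr]; first by rewrite muln0 in Hr.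
by rewrite ltn_divLR.
Qed.

Lemma mod_sq_lt n (r : 'I_(n * n)) : (r %% n < n)%N.
Proof.
case: n r => [|n] [r /= Hr]; first by rewrite muln0 in Hr.
by rewrite ltn_pmod.
Qed.

Definition idx_q n (r : 'I_(n * n)) : 'I_n := Ordinal (div_sq_lt r).
Definition idx_s n (r : 'I_(n * n)) : 'I_n := Ordinal (mod_sq_lt r).

(* vec: column stacking; entry (j*n + i) of vec V is V i j *)
Definition vec n (V : 'M[C]_n) : 'cV[C]_(n * n) :=
  \col_r V (idx_s r) (idx_q r).

Definition kron n (X Y : 'M[C]_n) : 'M[C]_(n * n) :=
  \matrix_(r, c) (X (idx_q r) (idx_q c) * Y (idx_s r) (idx_s c)).

Definition matricization_AB (realcase : bool) n (A B : 'M[C]_n)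
    (L : 'M[C]_(n * n)) : Prop :=
  mxF realcase L /\
  forall V : 'M[C]_n, mxF realcase V -> L *m vec V = vec (lyapAB A B V).

(* L is in  conj({S}''_F) (x) {S}''_F  =  F-span of { \bar X (x) Y : X, Y in {S}''_F } *)
Definition in_conj_tensor_bicomm (realcase : bool) n (S : 'M[C]_n)
    (L : 'M[C]_(n * n)) : Prop :=
  exists (k : nat) (c : 'I_k -> C) (X Y : 'I_k -> 'M[C]_n),
    (forall i, inF realcase (c i)) /\
    (forall i, bicomm realcase S (X i)) /\
    (forall i, bicomm realcase S (Y i)) /\
    L = \sum_(i < k) c i *: kron (conjmx (X i)) (Y i).

End Defs.

(* Main.v *)
Require Import Defs.
From HB Require Import structures.
From mathcomp Require Import all_boot all_order all_algebra.
From mathcomp Require Import zify ring.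
Set Implicit Arguments. Unset Strict Implicit. Unset Printing Implicit Defensive.
Import Order.TTheory GRing.Theory Num.Theory.
Local Open Scope ring_scope.

Section Aux.
Variable C : numClosedFieldType.
Variable n : nat.

Lemma mkidx_lt (a b : 'I_n) : (a * n + b < n * n)%N.
Proof. have := ltn_ord a; have := ltn_ord b; nia. Qed.

Definition mkidx (a b : 'I_n) : 'I_(n * n) := Ordinal (mkidx_lt a b).

Lemma idx_q_mk a b : idx_q (mkidx a b) = a.
Proof. apply: val_inj => /=; rewrite divnMDl ?divn_small ?addn0 //; by case: n a b => [[]|]. Qed.

Lemma idx_s_mk a b : idx_s (mkidx a b) = b.
Proof. apply: val_inj => /=; rewrite modnMDl modn_small //. Qed.

Lemma mk_idx (t : 'I_(n * n)) : mkidx (idx_q t) (idx_s t) = t.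
Proof. apply: val_inj => /=; by rewrite -divn_eq. Qed.

Lemma sum_sq (F : 'I_(n * n) -> C) :
  \sum_(t < n * n) F t = \sum_(a < n) \sum_(b < n) F (mkidx a b).
Proof.
rewrite pair_big /=.
rewrite (reindex (fun p : 'I_n * 'I_n => mkidx p.1 p.2)) //.
exists (fun t => (idx_q t, idx_s t)) => [[a b] _|t _] /=.
  by rewrite idx_q_mk idx_s_mk.
by rewrite mk_idx.
Qed.

Lemma kron_vec (X Y V : 'M[C]_n) :
  kron X Y *m vec V = vec (Y *m V *m X^T).
Proof.
apply/matrixP => r z; rewrite !mxE sum_sq.
apply: eq_bigr => a _; rewrite !mxE big_distrl /=; apply: eq_bigr => b _.
by rewrite !mxE idx_q_mk idx_s_mk; ring.
Qed.

Lemma kron_mul (X Y X' Y' : 'M[C]_n) :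
  kron X Y *m kron X' Y' = kron (X *m X') (Y *m Y').
Proof.
apply/matrixP => r z; rewrite !mxE sum_sq big_distrl /=.
apply: eq_bigr => a _; rewrite big_distrr /=; apply: eq_bigr => b _.
by rewrite !mxE idx_q_mk idx_s_mk; ring.
Qed.

Lemma idx_eq (r z : 'I_(n * n)) : (r == z) = (idx_q r == idx_q z) && (idx_s r == idx_s z).
Proof.
apply/eqP/andP => [->|[/eqP E1 /eqP E2]]; first by rewrite !eqxx.
by rewrite -(mk_idx r) -(mk_idx z) E1 E2.
Qed.

Lemma kron1 : kron (1%:M : 'M[C]_n) 1%:M = 1%:M.
Proof.
apply/matrixP => r z; rewrite !mxE idx_eq.
by case: (idx_q r == idx_q z); case: (idx_s r == idx_s z); rewrite /= ?mulr1n ?mulr0n ?mulr1 ?mulr0.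
Qed.

Lemma vec_delta (a b : 'I_n) : vec (delta_mx a b : 'M[C]_n) = delta_mx (mkidx b a) 0.
Proof.
apply/matrixP => r z; rewrite !mxE ord1 eqxx andbT eq_sym idx_eq idx_q_mk idx_s_mk.
by rewrite andbC (eq_sym a).
Qed.


Lemma inFP rc (x : C) : inF rc x <-> (rc -> x^* = x).
Proof.
rewrite /inF; case: rc => /=; last by split.
rewrite CrealE; split => [/eqP -> //|H]; by rewrite H.
Qed.

Lemma inF0 rc : inF rc (0 : C). Proof. by apply/inFP; rewrite rmorph0. Qed.
Lemma inF1 rc : inF rc (1 : C). Proof. by apply/inFP; rewrite rmorph1. Qed.
Lemma inFD rc (x y : C) : inF rc x -> inF rc y -> inF rc (x + y).
Proof. by move=> /inFP Hx /inFP Hy; apply/inFP => r; rewrite rmorphD /= Hx ?Hy. Qed.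
Lemma inFM rc (x y : C) : inF rc x -> inF rc y -> inF rc (x * y).
Proof. by move=> /inFP Hx /inFP Hy; apply/inFP => r; rewrite rmorphM /= Hx ?Hy. Qed.
Lemma inFN rc (x : C) : inF rc x -> inF rc (- x).
Proof. by move=> /inFP Hx; apply/inFP => r; rewrite rmorphN /= Hx. Qed.
Lemma inFV rc (x : C) : inF rc x -> inF rc (x^-1).
Proof. by move=> /inFP Hx; apply/inFP => r; rewrite fmorphV /= Hx. Qed.

Lemma conjmxK m k (X : 'M[C]_(m, k)) : Defs.conjmx (Defs.conjmx X) = X.
Proof. by apply/matrixP => i j; rewrite !mxE conjCK. Qed.

Lemma conjmx_mul m k p (X : 'M[C]_(m, k)) (Y : 'M[C]_(k, p)) :
  Defs.conjmx (X *m Y) = Defs.conjmx X *m Defs.conjmx Y.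
Proof. exact: map_mxM. Qed.

Lemma conjmx_add m k (X Y : 'M[C]_(m, k)) : Defs.conjmx (X + Y) = Defs.conjmx X + Defs.conjmx Y.
Proof. exact: map_mxD. Qed.

Lemma conjmx_tr m k (X : 'M[C]_(m, k)) : Defs.conjmx X^T = (Defs.conjmx X)^T.
Proof. by apply/matrixP => i j; rewrite !mxE. Qed.

Lemma conjmx1 : Defs.conjmx (1%:M : 'M[C]_n) = 1%:M.
Proof. exact: map_mx1. Qed.

Lemma adjmx_mul (X Y : 'M[C]_n) : adjmx (X *m Y) = adjmx Y *m adjmx X.
Proof. by rewrite /adjmx conjmx_mul trmx_mul. Qed.

Lemma adjmxK (X : 'M[C]_n) : adjmx (adjmx X) = X.
Proof. by rewrite /adjmx conjmx_tr conjmxK trmxK. Qed.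

Lemma mxFP rc m k (X : 'M[C]_(m, k)) : mxF rc X <-> (rc -> Defs.conjmx X = X).
Proof.
split => [H r|H i j].
  by apply/matrixP => i j; rewrite mxE; apply: (proj1 (inFP _ _) (H i j)).
by apply/inFP => r; rewrite -{2}(H r) mxE.
Qed.

Lemma mxF_mul rc m k p (X : 'M[C]_(m, k)) (Y : 'M[C]_(k, p)) :
  mxF rc X -> mxF rc Y -> mxF rc (X *m Y).
Proof. by move=> /mxFP HX /mxFP HY; apply/mxFP => r; rewrite conjmx_mul HX ?HY. Qed.

Lemma mxF_add rc m k (X Y : 'M[C]_(m, k)) :
  mxF rc X -> mxF rc Y -> mxF rc (X + Y).
Proof. by move=> /mxFP HX /mxFP HY; apply/mxFP => r; rewrite conjmx_add HX ?HY. Qed.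

Lemma mxF_conj rc m k (X : 'M[C]_(m, k)) : mxF rc X -> mxF rc (Defs.conjmx X).
Proof. by move=> /mxFP HX; apply/mxFP => r; rewrite conjmxK HX. Qed.

Lemma mxF_adj rc (X : 'M[C]_n) : mxF rc X -> mxF rc (adjmx X).
Proof. by move=> /mxFP HX; apply/mxFP => r; rewrite /adjmx conjmx_tr conjmxK HX. Qed.

Lemma mxF1 rc : mxF rc (1%:M : 'M[C]_n).
Proof. by apply/mxFP => r; rewrite conjmx1. Qed.

Lemma mxF_kron rc (X Y : 'M[C]_n) : mxF rc X -> mxF rc Y -> mxF rc (kron X Y).
Proof. by move=> HX HY i j; rewrite mxE; apply: inFM. Qed.

Lemma mxF_delta rc (a b : 'I_n) : mxF rc (delta_mx a b : 'M[C]_n).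
Proof. by move=> i j; rewrite mxE; case: (_ && _); [apply: inF1|apply: inF0]. Qed.

Lemma bicomm_mul rc (S X Y : 'M[C]_n) :
  bicomm rc S X -> bicomm rc S Y -> bicomm rc S (X *m Y).
Proof.
move=> [FX HX] [FY HY]; split; first exact: mxF_mul.
by move=> Z FZ HZ; rewrite -mulmxA HY // mulmxA HX // mulmxA.
Qed.

Lemma bicomm1 rc (S : 'M[C]_n) : bicomm rc S 1%:M.
Proof. by split; [exact: mxF1| move=> Z _ _; rewrite mul1mx mulmx1]. Qed.

Lemma bicomm_self rc (S : 'M[C]_n) : mxF rc S -> bicomm rc S S.
Proof. by move=> FS; split => // Z _ ->. Qed.

Lemma bicomm_adj rc (A B : 'M[C]_n) :
  bicomm rc A B -> bicomm rc (adjmx A) (adjmx B).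
Proof.
move=> [FB HB]; split; first exact: mxF_adj.
move=> Y FY HY.
have E: A *m adjmx Y = adjmx Y *m A.
  by rewrite -{1}(adjmxK A) -adjmx_mul -HY adjmx_mul adjmxK.
have := HB _ (mxF_adj FY) E.
by move=> /(congr1 (@adjmx C n)); rewrite !adjmx_mul adjmxK => ->.
Qed.


Definition catf T k1 k2 (f : 'I_k1 -> T) (g : 'I_k2 -> T) (i : 'I_(k1 + k2)) : T :=
  match split i with inl j => f j | inr j => g j end.

Lemma catfP T k1 k2 (f : 'I_k1 -> T) (g : 'I_k2 -> T) (P : T -> Prop) :
  (forall i, P (f i)) -> (forall i, P (g i)) -> forall i, P (catf f g i).
Proof. by move=> Hf Hg i; rewrite /catf; case: (split i). Qed.

Lemma catf_l T k1 k2 (f : 'I_k1 -> T) (g : 'I_k2 -> T) i : catf f g (lshift k2 i) = f i.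
Proof. by rewrite /catf (unsplitK (inl _ i)). Qed.

Lemma catf_r T k1 k2 (f : 'I_k1 -> T) (g : 'I_k2 -> T) i : catf f g (rshift k1 i) = g i.
Proof. by rewrite /catf (unsplitK (inr _ i)). Qed.

Variable rc : bool.
Variable S : 'M[C]_n.
Local Notation T := (in_conj_tensor_bicomm rc S).

Lemma T0 : T 0.
Proof.
exists 0%N, (fun _ => 0), (fun _ => 0), (fun _ => 0).
by do 3 (split; first by case); rewrite big_ord0.
Qed.

Lemma T_kron X Y : bicomm rc S X -> bicomm rc S Y -> T (kron (Defs.conjmx X) Y).
Proof.
move=> HX HY; exists 1%N, (fun _ => 1), (fun _ => X), (fun _ => Y).
split; first by move=> _; exact: inF1.
by split; [move=> _; exact: HX|split; [move=> _; exact: HY|]]; rewrite big_ord1 scale1r.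
Qed.

Lemma TD M N : T M -> T N -> T (M + N).
Proof.
move=> [k1 [c1 [X1 [Y1 [H1 [H2 [H3 ->]]]]]]] [k2 [c2 [X2 [Y2 [H1' [H2' [H3' ->]]]]]]].
exists (k1 + k2)%N, (catf c1 c2), (catf X1 X2), (catf Y1 Y2).
split; first exact: (catfP (P := inF rc)).
split; first exact: (catfP (P := bicomm rc S)).
split; first exact: (catfP (P := bicomm rc S)).
by rewrite big_split_ord /=; congr (_ + _); apply: eq_bigr => i _;
  rewrite ?catf_l ?catf_r.
Qed.

Lemma TZ a M : inF rc a -> T M -> T (a *: M).
Proof.
move=> Ha [k [c [X [Y [H1 [H2 [H3 ->]]]]]]].
exists k, (fun i => a * c i), X, Y.
split; first by move=> i; apply: inFM.
do 2 (split => //).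
by rewrite scaler_sumr; apply: eq_bigr => i _; rewrite scalerA.
Qed.

Lemma TM1 M X Y : T M -> bicomm rc S X -> bicomm rc S Y ->
  T (M *m kron (Defs.conjmx X) Y).
Proof.
move=> [k [c [X1 [Y1 [H1 [H2 [H3 ->]]]]]]] HX HY.
exists k, c, (fun i => X1 i *m X), (fun i => Y1 i *m Y).
split => //; split; first by move=> i; apply: bicomm_mul.
split; first by move=> i; apply: bicomm_mul.
rewrite mulmx_suml; apply: eq_bigr => i _.
by rewrite -scalemxAl kron_mul conjmx_mul.
Qed.

Lemma TM M N : T M -> T N -> T (M *m N).
Proof.
move=> HM [k [c [X [Y [H1 [H2 [H3 ->]]]]]]].
elim: k c X Y H1 H2 H3 => [|k IH] c X Y H1 H2 H3.
  by rewrite big_ord0 mulmx0; apply: T0.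
rewrite big_ord_recr /= mulmxDr; apply: TD.
  by apply: IH => i; [apply: H1|apply: H2|apply: H3].
by rewrite -scalemxAr; apply: TZ => //; apply: TM1.
Qed.

Lemma T1 : T 1%:M.
Proof. by rewrite -kron1 -{1}conjmx1; apply: T_kron; apply: bicomm1. Qed.

Lemma Tsum k (F : 'I_k -> 'M[C]_(n * n)) : (forall i, T (F i)) -> T (\sum_(i < k) F i).
Proof.
move=> H; elim/big_ind: _ => //; [exact: T0|exact: TD].
Qed.

End Aux.

Section Inv.
Variable C : numClosedFieldType.
Variable N : nat.
Variable rc : bool.
Variable P : 'M[C]_N.+1 -> Prop.
Hypothesis P0 : P 0.
Hypothesis P1 : P 1%:M.
Hypothesis PD : forall A B, P A -> P B -> P (A + B).
Hypothesis PM : forall A B, P A -> P B -> P (A *m B).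
Hypothesis PZ : forall c A, inF rc c -> P A -> P (c *: A).

Lemma PX M i : P M -> P (M ^+ i).
Proof.
move=> HM; elim: i => [|i IH]; first by rewrite expr0.
by rewrite exprS -mulmxE; apply: PM.
Qed.

Lemma Psum k (F : 'I_k -> 'M[C]_N.+1) : (forall i, P (F i)) -> P (\sum_(i < k) F i).
Proof. move=> H; elim/big_ind: _ => //. Qed.

Lemma horner_mx_sum (M : 'M[C]_N.+1) (p : {poly C}) :
  horner_mx M p = \sum_(i < size p) p`_i *: M ^+ i.
Proof.
rewrite -{1}(coefK p) poly_def rmorph_sum /=; apply: eq_bigr => i _.
by rewrite linearZ /= rmorphXn /= horner_mx_X.
Qed.

Lemma P_inv M : (forall i, inF rc (char_poly M)`_i) -> M \in unitmx -> P M -> P (invmx M).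
Proof.
move=> Hc Mu HM.
set p := char_poly M.
have CH := Cayley_Hamilton M.
rewrite horner_mx_sum size_char_poly big_ord_recl /= expr0 in CH.
set Q := \sum_(i < N.+1) p`_i.+1 *: M ^+ i.
have EQ : M *m Q = - p`_0 *: 1%:M.
  apply/eqP; rewrite -subr_eq0 scaleNr opprK addrC; apply/eqP; rewrite -[X in _ = X]CH.
  congr (_ + _); rewrite mulmx_sumr; apply: eq_bigr => i _.
  by rewrite -scalemxAr /= exprS -mulmxE.
have p0 : p`_0 != 0.
  rewrite /p char_poly_det mulf_eq0 negb_or signr_eq0 /=.
  by rewrite -unitfE -unitmxE.
have -> : invmx M = (- p`_0)^-1 *: Q.
  rewrite -[RHS](mulKmx Mu) -scalemxAr EQ scalerA mulVf ?oppr_eq0 //.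
  by rewrite scale1r mulmx1.
apply: PZ; first by apply/inFV/inFN.
apply: Psum => i; apply: PZ => //; exact: PX.
Qed.
End Inv.

Section Sylv.
Variable C : numClosedFieldType.
Variable n' : nat.
Local Notation n := n'.+1.

Lemma comm_horner (X A N : 'M[C]_n) : X *m A = N *m X ->
  forall p, X *m horner_mx A p = horner_mx N p *m X.
Proof.
move=> H; elim/poly_ind => [|p c IH]; first by rewrite !rmorph0 mulmx0 mul0mx.
rewrite !rmorphD !rmorphM /= !horner_mx_X !horner_mx_C -!mulmxE.
rewrite mulmxDr mulmxDl mulmxA IH -!mulmxA H; congr (_ + _).
by rewrite scalar_mxC.
Qed.

Lemma det_adj_shift (A : 'M[C]_n) z :
  \det (- adjmx A - z%:M) = 0 -> eigenvalue A (- z^*).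
Proof.
move=> H.
have E : - adjmx A - z%:M = -1 *: (Defs.conjmx (A + (z^*)%:M))^T.
  apply/matrixP => i j; rewrite !mxE /= rmorphD /= rmorphMn /= conjCK (eq_sym i j).
  by case: (j == i); rewrite /= ?mulr1n ?mulr0n; ring.
rewrite E detZ det_tr det_map_mx in H.
move/eqP: H; rewrite mulf_eq0 signr_eq0 /= conjC_eq0 => /det0P [v v0 Hv].
apply/eigenvalueP; exists v => //.
move: Hv; rewrite mulmxDr mul_mx_scalar => /eqP; rewrite addr_eq0 => /eqP ->.
by rewrite scaleNr.
Qed.

Lemma lyap_inj (A X : 'M[C]_n) : lyap_regular A -> lyap A X = 0 -> X = 0.
Proof.
move=> Hreg HX.
have H1 : X *m A = (- adjmx A) *m X.
  by apply/eqP; rewrite mulNmx -addr_eq0; apply/eqP.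
have H2 := comm_horner H1 (char_poly A).
rewrite Cayley_Hamilton mulmx0 in H2.
have [r Er] := closed_field_poly_normal (char_poly A).
rewrite (monicP (char_poly_monic A)) scale1r in Er.
have Hu : horner_mx (- adjmx A) (char_poly A) \in unitmx.
  rewrite Er rmorph_prod big_seq /=.
  apply: (big_ind (fun M : 'M[C]_n => M \in unitmx)) => [|M1 M2|z zr].
  - exact: unitmx1.
  - by rewrite -mulmxE unitmx_mul => -> ->.
  rewrite rmorphB /= horner_mx_X horner_mx_C unitmxE unitfE.
  apply/negP => /eqP /det_adj_shift Hev.
  have Hz : eigenvalue A z by rewrite eigenvalue_root_char Er root_prod_XsubC.
  by move: (Hreg _ _ Hz Hev); rewrite rmorphN /= conjCK subrr eqxx.
by rewrite -(mulKmx Hu X) -H2 mulmx0.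
Qed.
End Sylv.

Section Final.
Variable C : numClosedFieldType.

Lemma lyap_linear n (A : 'M[C]_n) : linear (lyap A).
Proof.
move=> a X Y; rewrite /lyap mulmxDl mulmxDr scalerDr -scalemxAl -scalemxAr.
by rewrite addrACA.
Qed.

HB.instance Definition _ (n : nat) (A : 'M[C]_n) :=
  GRing.isLinear.Build C 'M[C]_n 'M[C]_n *:%R (lyap A) (lyap_linear A).

Variable n : nat.

Lemma vec_add (P Q : 'M[C]_n) : vec (P + Q) = vec P + vec Q.
Proof. by apply/matrixP => i j; rewrite !mxE. Qed.

Definition unvec (c : 'cV[C]_(n * n)) : 'M[C]_n := \matrix_(i, j) c (mkidx j i) 0.

Lemma unvecK c : vec (unvec c) = c.
Proof. by apply/matrixP => r z; rewrite !mxE mk_idx ord1. Qed.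

Lemma vecK X : unvec (vec X) = X.
Proof. by apply/matrixP => i j; rewrite !mxE idx_q_mk idx_s_mk. Qed.

Lemma unvec0 : unvec 0 = 0.
Proof. by apply/matrixP => i j; rewrite !mxE. Qed.

Lemma vec0 : vec (0 : 'M[C]_n) = 0.
Proof. by apply/matrixP => i j; rewrite !mxE. Qed.

Definition MY (Y : 'M[C]_n) : 'M[C]_(n * n) :=
  kron (Defs.conjmx (adjmx Y)) 1%:M + kron 1%:M (adjmx Y).

Lemma vec_lyap (Y X : 'M[C]_n) : vec (lyap Y X) = MY Y *m vec X.
Proof.
rewrite /lyap /MY vec_add mulmxDl !kron_vec.
rewrite {2}/adjmx conjmx_tr conjmxK trmxK trmx1 mul1mx mulmx1.
by [].
Qed.

Lemma char_real rc (M : 'M[C]_(n * n)) : mxF rc M -> forall i, inF rc (char_poly M)`_i.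
Proof.
move=> /mxFP HM i; apply/inFP => r.
have := congr1 (fun p : {poly C} => p`_i) (map_char_poly Num.Def.conjC M).
rewrite coef_map /= => ->.
have E : map_mx (@Num.conj C) M = M := HM r.
by rewrite E.
Qed.

End Final.

Theorem lemma4p1 (C : numClosedFieldType) (realcase : bool) (n : nat)
    (A B : 'M[C]_n) (L : 'M[C]_(n * n)) :
  mxF realcase A ->
  lyap_regular A ->
  bicomm realcase A B ->
  matricization_AB realcase A B L ->
  in_conj_tensor_bicomm realcase (adjmx A) L.
Proof.
move=> FA Hreg HB [FL HL].
case: n A B L FA Hreg HB FL HL => [|n'] A B L FA Hreg HB FL HL.
  exists 0%N, (fun _ => 0), (fun _ => 0), (fun _ => 0).
  do 3 (split; first by case).
  by rewrite big_ord0; apply/matrixP => i; have := ltn_ord i; rewrite {2}muln0.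
set S := adjmx A.
set MA := MY A; set MB := MY B.
have Lu : lin_mx (lyap A) \in unitmx.
  rewrite unitmxE unitfE; apply/negP => /det0P [v v0 Hv].
  rewrite mul_rV_lin in Hv.
  move/(congr1 vec_mx): Hv; rewrite mxvecK linear0 => /(lyap_inj Hreg) Hv.
  by move: v0; rewrite -(vec_mxK v) Hv linear0 eqxx.
have inv_lyap V : lyap A (lyap_inv A V) = V.
  have := mx_rV_lin (lyap A) (mxvec V *m invmx (lin_mx (lyap A))).
  by rewrite mulmxKV // mxvecK => <-.
have MAu : MA \in unitmx.
  rewrite unitmxE unitfE -det_tr; apply/negP => /det0P [v v0 Hv].
  move/(congr1 trmx): Hv; rewrite trmx_mul trmxK trmx0 => Hv.
  rewrite -(unvecK v^T) -vec_lyap in Hv.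
  have H0 : lyap A (unvec v^T) = 0 by rewrite -[LHS]vecK Hv unvec0.
  move: (lyap_inj Hreg H0) => Hu.
  by move: v0; rewrite -(trmxK v) -(unvecK v^T) Hu vec0 trmx0 eqxx.
have key V : mxF realcase V -> L *m vec V = MB *m invmx MA *m vec V.
  move=> FV; rewrite HL // /lyapAB vec_lyap.
  have -> : vec V = MA *m vec (lyap_inv A V) by rewrite -vec_lyap inv_lyap.
  by rewrite -(mulmxA MB) mulKmx.
have EL : L = MB *m invmx MA.
  apply/matrixP => i j.
  have := key _ (@mxF_delta _ _ realcase (idx_s j) (idx_q j)).
  rewrite vec_delta mk_idx -!colE => /matrixP /(_ i 0); rewrite !mxE.
  by [].
have FS : mxF realcase S by apply: mxF_adj.
have BS : bicomm realcase S (adjmx B) by apply: bicomm_adj.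
have TMA : in_conj_tensor_bicomm realcase S MA.
  apply: TD; first by apply: T_kron; [apply: bicomm_self | apply: bicomm1].
  by rewrite -{1}conjmx1; apply: T_kron; [apply: bicomm1 | apply: bicomm_self].
have TMB : in_conj_tensor_bicomm realcase S MB.
  apply: TD; first by apply: T_kron; [ | apply: bicomm1].
  by rewrite -{1}conjmx1; apply: T_kron; [apply: bicomm1 | ].
have FMA : mxF realcase MA.
  by apply: mxF_add; apply: mxF_kron; rewrite ?conjmx1; do ?[apply: mxF_conj]; do ?[apply: mxF1]; apply: mxF_adj.
rewrite EL; apply: TM => //.
apply: (P_inv (rc := realcase)) => //.
- exact: T0.
- exact: T1.
- exact: (@TD _ _ realcase S).
- exact: (@TM _ _ realcase S).
- exact: (@TZ _ _ realcase S).
- exact: (@char_real _ n'.+1 realcase MA FMA).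
Qed.
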